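(* Fix $\lambda_s>0$, $\lambda>0$, $\alpha\in(1,2]$ and $c>0$, where in the case $\alpha=2$ we require $c<\frac12$. For each $n\ge 2$ let $\tilde n(n)$ be an integer with $0\le\tilde n(n)\le\min\{\binom n2, c\,n^\alpha\}$. Then there exist $C'>0$ and $N$ such that for all $n\ge N$ the average age $\Delta=\frac1n\sum_{i=1}^n\Delta_i$ of the greedy jammed network $G^{\mathrm{gr}}\big(n,\binom n2-\tilde n(n)\big)$ satisfies $\Delta\le C' n^{\alpha-1}$.
   Context: Version-age model. A gossip network on a finite node set $\mathcal N$ is specified by source rates $\lambda_{0j}>0$ and gossip rates $\lambda_{ij}\ge 0$ ($i\neq j$; rate at which $i$ sends to $j$); $\lambda_s>0$ is the source's update rate. For nonempty $S\subseteq\mathcal N$ let $N(S)=\{i\in\mathcal N\setminus S:\ \sum_{j\in S}\lambda_{ij}>0\}$ and define $$\Delta_S=\frac{\lambda_s+\sum_{i\in N(S)}\big(\sum_{j\in S}\lambda_{ij}\big)\Delta_{S\cup\{i\}}}{\sum_{j\in S}\lambda_{0j}+\sum_{i\in N(S)}\sum_{j\in S}\lambda_{ij}}$$ (well defined by downward induction on $|S|$); $\Delta_i=\Delta_{\{i\}}$. Networks with uniform link rate: node set $\{1,\dots,n\}$, $\lambda_{0j}=\lambda/n$ for all $j$, and a set of links (unordered pairs of distinct nodes); for each link $\{a,b\}$, $\lambda_{ab}=\lambda_{ba}=\lambda/n$, and $\lambda_{ab}=0$ otherwise. The fully connected network has all $\binom n2$ pairs as links; $\tilde n$ jammers remove $\tilde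 n$ distinct links, leaving $\bar n=\binom n2-\tilde n$ links. Greedy configuration $G^{\mathrm{gr}}(n,\bar n)$ for $0\le\bar n\le\binom n2$: write uniquely $\bar n=\binom k2+c$ with $1\le k\le n$ and $0\le c\le k-1$; the links are all pairs $\{a,b\}$ with $1\le a<b\le k$, together with (if $c>0$) the pairs $\{j,k+1\}$ for $1\le j\le c$; there are no other links. *)

(* Defs.v *)
From HB Require Import structures.
From mathcomp Require Import all_boot all_order all_algebra.
From mathcomp Require Import reals exp.
Set Implicit Arguments. Unset Strict Implicit. Unset Printing Implicit Defensive.
Import Order.TTheory GRing.Theory Num.Theory.
Local Open Scope ring_scope.

Section VersionAge.
Variables (R : realType) (n : nat).
(* Node set N = 'I_n (node i of the paper is the ordinal i-1).
   l0 j  = lambda_{0j} (source rate to j),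
   l i j = lambda_{ij} (rate at which i sends to j),
   ls    = lambda_s. *)
Variables (l0 : 'I_n -> R) (l : 'I_n -> 'I_n -> R) (ls : R).

Definition inflow (S : {set 'I_n}) (i : 'I_n) : R := \sum_(j in S) l i j.

Definition nbr (S : {set 'I_n}) : {set 'I_n} :=
  [set i | (i \notin S) && (0 < inflow S i)].

(* Downward recursion on |S|, with fuel k = n - |S|.  At fuel 0 (S = N)
   N(S) is empty and the formula reduces to ls / sum_{j in S} l0 j. *)
Fixpoint Dfuel (k : nat) (S : {set 'I_n}) : R :=
  match k with
  | 0 => ls / (\sum_(j in S) l0 j)
  | k'.+1 =>
      (ls + \sum_(i in nbr S) inflow S i * Dfuel k' (S :|: [set i]))
      / (\sum_(j in S) l0 j + \sum_(i in nbr S) inflow S i)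
  end.

Definition DeltaS (S : {set 'I_n}) : R := Dfuel (n - #|S|) S.

Definition Delta_i (i : 'I_n) : R := DeltaS [set i].

Definition avg_age : R := (n%:R)^-1 * \sum_(i < n) Delta_i i.
End VersionAge.

(* Network with uniform link rate lam on node set 'I_n with link relation
   link (assumed symmetric): lambda_{0j} = lam/n, lambda_{ab} = lam/n on links. *)
Definition unif_l0 (R : realType) (n : nat) (lam : R) : 'I_n -> R :=
  fun _ => lam / n%:R.
Definition unif_l (R : realType) (n : nat) (lam : R) (link : rel 'I_n)
  : 'I_n -> 'I_n -> R := fun a b => if link a b then lam / n%:R else 0.

(* Unique decomposition nbar = 'C(k,2) + c with 1 <= k <= n, 0 <= c <= k-1
   (for nbar <= 'C(n,2), n >= 1): k is the largest k <= n with 'C(k,2) <= nbar. *)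
Definition gr_k (n nbar : nat) : nat := (\max_(k < n.+1 | 'C(k, 2) <= nbar) k)%N.
Definition gr_c (n nbar : nat) : nat := (nbar - 'C(gr_k n nbar, 2))%N.

(* Greedy configuration G^gr(n, nbar), 0-indexed: paper's nodes 1..k are
   ordinals 0..k-1, paper's node k+1 is ordinal k, paper's nodes 1..c are 0..c-1. *)
Definition gr_link (n nbar : nat) : rel 'I_n := fun a b =>
  let k := gr_k n nbar in let c := gr_c n nbar in
  ([&& (a : nat) < k, (b : nat) < k & a != b]
   || (0 < c) && ((((a : nat) == k) && ((b : nat) < c))
                  || (((b : nat) == k) && ((a : nat) < c))))%N.

Definition greedy_avg_age (R : realType) (ls lam : R) (n nbar : nat) : R :=
  avg_age (@unif_l0 R n lam) (@unif_l R n lam (@gr_link n nbar)) ls.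

(* Main.v *)
Require Import Defs.
From HB Require Import structures.
From mathcomp Require Import all_boot all_order all_algebra.
From mathcomp Require Import reals exp.
From mathcomp Require Import ring lra zify.
Import Order.TTheory GRing.Theory Num.Theory.
Local Open Scope ring_scope.
Set Implicit Arguments. Unset Strict Implicit. Unset Printing Implicit Defensive.


Section General.
Variables (R : realType) (n : nat) (l0 : 'I_n -> R) (l : 'I_n -> 'I_n -> R) (ls : R).
Hypothesis l0_gt0 : forall j, 0 < l0 j.
Hypothesis l_ge0 : forall i j, 0 <= l i j.

Lemma L0_gt0 (S : {set 'I_n}) : S != set0 -> 0 < \sum_(j in S) l0 j.
Proof.
case/set0Pn=> j jS; rewrite (bigD1 j) //=.
have h1 := l0_gt0 j.
have h2 : 0 <= \sum_(i in S | i != j) l0 i by apply: sumr_ge0 => i _; exact: ltW.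
lra.
Qed.

Lemma W_ge0 (S : {set 'I_n}) : 0 <= \sum_(i in nbr l S) inflow l S i.
Proof. by apply: sumr_ge0 => i; rewrite inE => /andP[_ /ltW]. Qed.

Variable B : {set 'I_n} -> R.
Hypothesis Bsup : forall S, S != set0 ->
  ls + \sum_(i in nbr l S) inflow l S i * B (S :|: [set i]) <=
  (\sum_(j in S) l0 j + \sum_(i in nbr l S) inflow l S i) * B S.

Lemma Dfuel_le f (S : {set 'I_n}) : (#|S| + f = n)%N -> S != set0 -> Dfuel l0 l ls f S <= B S.
Proof.
elim: f S => [|f IH] S hS hne /=.
  have ST : S = [set: 'I_n].
    by apply/eqP; rewrite eqEcard subsetT cardsT card_ord; apply/eqP; lia.
  have := Bsup hne.
  have -> : nbr l S = set0 by apply/setP => i; rewrite !inE ST in_setT.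
  rewrite !big_set0 => h.
  rewrite addr0 in h.
  rewrite ler_pdivrMr; last exact: L0_gt0.
  rewrite mulrC. move: h; rewrite (addr0 (\sum_(j in S) l0 j)). done.
have hpos : 0 < \sum_(j in S) l0 j + \sum_(i in nbr l S) inflow l S i.
  have := L0_gt0 hne; have := W_ge0 S; lra.
rewrite ler_pdivrMr // mulrC; apply: le_trans (Bsup hne).
rewrite lerD2l; apply: ler_sum => i; rewrite inE => /andP[iS wi].
apply: ler_wpM2l; first exact: ltW.
apply: IH; last by apply/set0Pn; exists i; rewrite !inE eqxx orbT.
rewrite setUC cardsU1 iS /=. move: hS; rewrite addnS add1n addSn; exact: id.
Qed.

Lemma DeltaS_le (S : {set 'I_n}) : S != set0 -> DeltaS l0 l ls S <= B S.
Proof.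
move=> hne; apply: Dfuel_le hne.
have : (#|S| <= n)%N by have := max_card S; rewrite card_ord.
lia.
Qed.
End General.


Section Spec.
Variables (R : realType) (n k : nat) (u ls : R) (link : rel 'I_n).
Hypotheses (hu : 0 < u) (hls : 0 < ls) (hkn : (k <= n)%N).
Hypothesis hlink : forall a b : 'I_n, (a < k)%N -> (b < k)%N -> a != b -> link a b.

Definition Kset := [set i : 'I_n | (i < k)%N].
Definition gg (j : nat) : R := ((j * (k.+1 - j))%:R)^-1.
Definition HH (m : nat) : R := if m == 0%N then 1 else \sum_(m <= j < k.+1) gg j.

Lemma cardK : #|Kset| = k.
Proof.
have -> : Kset = [set widen_ord hkn i | i in 'I_k].
  apply/setP => x; rewrite inE; apply/idP/imsetP => [xk|[y _ ->]] /=.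
    by exists (Ordinal xk) => //; apply: val_inj.
  exact: ltn_ord.
rewrite card_imset ?card_ord //.
by move=> a b /(congr1 val) /= /val_inj.
Qed.

Lemma gg_ge0 j : 0 <= gg j.
Proof. by rewrite /gg invr_ge0 ler0n. Qed.

Lemma HH_step m : (1 <= m)%N -> (m <= k)%N -> HH m = gg m + HH m.+1.
Proof.
move=> h1 h2; rewrite /HH; case: m h1 h2 => // m _ h2 /=.
by rewrite big_ltn // ltnS.
Qed.

Lemma HH1_le1 : HH 1 <= 1.
Proof.
rewrite /HH /=; have [k0|kpos] := posnP k; first by rewrite big_geq // k0.
apply: (@le_trans _ _ (\sum_(1 <= j < k.+1) (k%:R)^-1)).
  rewrite big_nat_cond [X in _ <= X]big_nat_cond; apply: ler_sum => j /andP[/andP[j1 j2] _].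
  rewrite /gg lef_pV2 ?posrE ?ltr0n //; last by nia.
  by rewrite ler_nat; nia.
rewrite sumr_const_nat subn1 succnK.
have -> : (k%:R)^-1 *+ k = (k%:R)^-1 * k%:R :> R by rewrite mulr_natr.
rewrite mulVf //.
by rewrite pnatr_eq0 -lt0n.
Qed.

Lemma HH_mono m : HH m.+1 <= HH m.
Proof.
case: m => [|m]; first exact: HH1_le1.
have [mk|km] := leqP m.+1 k.
  by rewrite (HH_step _ mk) // lerDr gg_ge0.
by rewrite /HH /= !big_geq //; lia.
Qed.

Lemma HH_le1 m : HH m <= 1.
Proof.
elim: m => [|m IH]; first by rewrite /HH.
exact: le_trans (HH_mono m) IH.
Qed.

Lemma HH_ge0 m : 0 <= HH m.
Proof.
rewrite /HH; case: (m == 0%N) => //; apply: sumr_ge0 => j _; exact: gg_ge0.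
Qed.

Lemma HH_ge_gg m : (1 <= m)%N -> (m <= k)%N -> gg m <= HH m.
Proof. by move=> h1 h2; rewrite HH_step // lerDl HH_ge0. Qed.

Lemma gg_id m : (1 <= m)%N -> (m <= k)%N ->
  m%:R * gg m + (k - m)%:R * (m%:R * gg m) = 1.
Proof.
move=> h1 h2.
have -> : m%:R * gg m + (k - m)%:R * (m%:R * gg m) = ((1 + (k - m))%:R * m%:R) * gg m
  by rewrite natrD; ring.
rewrite /gg -natrM.
have -> : ((1 + (k - m)) * m = m * (k.+1 - m))%N by nia.
by rewrite mulfV // pnatr_eq0; nia.
Qed.

Let l0 := fun _ : 'I_n => u.
Let ll := fun a b : 'I_n => if link a b then u else 0.
Definition BB (S : {set 'I_n}) : R := ls / u * HH #|S :&: Kset|.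

Lemma card_addK (S : {set 'I_n}) i : i \notin S ->
  #|(S :|: [set i]) :&: Kset| = (#|S :&: Kset| + (i \in Kset))%N.
Proof.
move=> iS; case iK: (i \in Kset); have iK' := iK; rewrite inE in iK'.
  have -> : (S :|: [set i]) :&: Kset = i |: (S :&: Kset).
    apply/setP => x; rewrite !inE; case: (eqVneq x i) => [->|_]; by rewrite ?iK' ?orbT ?orbF.
  by rewrite cardsU1 inE (negbTE iS) /= addnC.
have -> : (S :|: [set i]) :&: Kset = S :&: Kset.
  apply/setP => x; rewrite !inE; case: (eqVneq x i) => [->|_]; by rewrite ?iK' ?andbF ?orbF.
by rewrite addn0.
Qed.

Lemma inflow_low (S : {set 'I_n}) i : i \in Kset -> i \notin S ->
  #|S :&: Kset|%:R * u <= inflow ll S i.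
Proof.
move=> iK iS; rewrite /inflow (big_setID Kset) /=.
have -> : \sum_(j in S :&: Kset) ll i j = \sum_(j in S :&: Kset) u.
  apply: eq_bigr => j; rewrite !inE => /andP[jS jK].
  have iK' := iK; rewrite inE in iK'.
  rewrite /ll hlink //.
  by apply: contraNneq iS => ->.
rewrite sumr_const -[u *+ _]mulr_natl lerDl; apply: sumr_ge0 => j _.
by rewrite /ll; case: (link i j) => //; exact: ltW.
Qed.

Lemma Bsup (S : {set 'I_n}) : S != set0 ->
  ls + \sum_(i in nbr ll S) inflow ll S i * BB (S :|: [set i]) <=
  (\sum_(j in S) l0 j + \sum_(i in nbr ll S) inflow ll S i) * BB S.
Proof.
move=> hne.
set m := #|S :&: Kset|. set N := nbr ll S. set W := \sum_(i in N) inflow ll S i.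
have L0E : \sum_(j in S) l0 j = #|S|%:R * u by rewrite sumr_const mulr_natl.
have wge0 : forall i, i \in N -> 0 <= inflow ll S i.
  by move=> i; rewrite inE => /andP[_ /ltW].
have notS : forall i, i \in N -> i \notin S.
  by move=> i; rewrite inE => /andP[].
set beta := ls / u.
have bu : beta * u = ls by rewrite /beta divfK // gt_eqF.
have b0 : 0 <= beta by rewrite /beta divr_ge0 // ltW.
have Sge1 : (1 <= #|S|)%N by rewrite card_gt0.
rewrite L0E /BB -/beta -/m.
have [m0|mpos] := posnP m.
  rewrite m0 {1}/HH /= mulr1.
  have h1 : \sum_(i in N) inflow ll S i * (beta * HH #|(S :|: [set i]) :&: Kset|) <= W * beta.
    rewrite /W mulr_suml; apply: ler_sum => i iN; apply: ler_wpM2l; first exact: wge0.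
    by rewrite -[X in _ <= X]mulr1 ler_wpM2l // HH_le1.
  have h2 : ls <= #|S|%:R * ls by rewrite ler_peMl ?ler1n // ltW.
  have E : (#|S|%:R * u + W) * beta = #|S|%:R * ls + W * beta by rewrite -bu; ring.
  rewrite E; lra.
have mk : (m <= k)%N by rewrite -cardK /m subset_leq_card // subsetIr.
have Hm : HH m = gg m + HH m.+1 by rewrite HH_step.
set c := m%:R * u * (beta * gg m).
have key : forall i, i \in N -> inflow ll S i * (beta * HH #|(S :|: [set i]) :&: Kset|) <=
    inflow ll S i * (beta * HH m) - (if i \in Kset then c else 0).
  move=> i iN; rewrite card_addK ?notS // -/m; case iK: (i \in Kset) => /=.
    rewrite addn1 Hm mulrDr mulrDr.
    have low := inflow_low iK (notS _ iN).
    have h : c <= inflow ll S i * (beta * gg m).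
      by rewrite /c ler_wpM2r // mulr_ge0 // gg_ge0.
    lra.
  by rewrite addn0 subr0.
have h1 : \sum_(i in N) inflow ll S i * (beta * HH #|(S :|: [set i]) :&: Kset|) <=
    \sum_(i in N) (inflow ll S i * (beta * HH m) - (if i \in Kset then c else 0)).
  exact: ler_sum key.
rewrite sumrB -mulr_suml -/W -big_mkcondr /= in h1.
have EE : \sum_(i in N | i \in Kset) c = c *+ #|N :&: Kset|.
  rewrite -sumr_const; apply: eq_bigl => i /=; by rewrite in_setI.
rewrite EE in h1.
have XK : (k - m <= #|N :&: Kset|)%N.
  have -> : (k - m)%N = #|Kset :\: S| by rewrite cardsD setIC cardK.
  apply: subset_leq_card; apply/subsetP => x; rewrite !inE => /andP[xS xK].
  rewrite xK andbT xS /=.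
  have xK2 : x \in Kset by rewrite inE.
  apply: lt_le_trans (inflow_low xK2 xS).
  by rewrite mulr_gt0 // ltr0n.
set X := #|N :&: Kset| in h1 XK.
have E1 : (#|S|%:R * u + W) * (beta * HH m) = W * (beta * HH m) + ls * (#|S|%:R * HH m)
  by rewrite -bu; ring.
have E2 : c *+ X = ls * (X%:R * (m%:R * gg m)) by rewrite -mulr_natr /c -bu; ring.
rewrite E2 in h1; rewrite E1.
have g0 := gg_ge0 m.
have hA : m%:R * gg m <= #|S|%:R * HH m.
  apply: ler_pM; rewrite ?ler0n ?HH_ge_gg //.
  by rewrite ler_nat /m subset_leq_card // subsetIl.
have hB : (k - m)%:R * (m%:R * gg m) <= X%:R * (m%:R * gg m).
  by rewrite ler_wpM2r ?mulr_ge0 ?ler0n // ler_nat.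
have hid := gg_id mpos mk.
have h3 : 1 <= #|S|%:R * HH m + X%:R * (m%:R * gg m) by lra.
have h4 : ls <= ls * (#|S|%:R * HH m) + ls * (X%:R * (m%:R * gg m)).
  by rewrite -mulrDr ler_peMr // ltW.
lra.
Qed.
End Spec.


Lemma bin2_mul m : ('C(m, 2) * 2 = m * m.-1)%N.
Proof. elim: m => // m IH; rewrite binS bin1 mulnDl IH; case: m {IH} => //= m; nia. Qed.

Lemma gr_k_le n nbar : (gr_k n nbar <= n)%N.
Proof. by apply/bigmax_leqP => i _; rewrite -ltnS. Qed.

Lemma gr_k_max n nbar : (gr_k n nbar < n)%N -> (nbar < 'C((gr_k n nbar).+1, 2))%N.
Proof.
move=> h; rewrite ltnNge; apply/negP => hle.
have h' : ((gr_k n nbar).+1 < n.+1)%N by [].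
have := @leq_bigmax_cond _ (fun k : 'I_n.+1 => 'C(k, 2) <= nbar)%N (fun k => nat_of_ord k) (Ordinal h') hle.
by rewrite -/(gr_k n nbar) /= ltnn.
Qed.

Lemma gap_nat n k t : (2 <= n)%N -> (t <= 'C(n, 2))%N -> (k < n)%N ->
  ('C(n, 2) - t < 'C(k.+1, 2))%N -> ((n - k.+1) * n <= 2 * t)%N.
Proof.
move=> h2 ht hk hc.
have e1 := bin2_mul n. have e2 := bin2_mul k.+1.
rewrite /= in e2.
have : ((n - k.+1) * n <= n * n.-1 - k.+1 * k)%N by nia.
nia.
Qed.

Definition harm (R : realType) (k : nat) : R := \sum_(1 <= j < k.+1) (j%:R)^-1.

Lemma harm_ge0 (R : realType) k : 0 <= harm R k.
Proof. by apply: sumr_ge0 => j _; rewrite invr_ge0 ler0n. Qed.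

Lemma harm_mono (R : realType) k n : (k <= n)%N -> harm R k <= harm R n.
Proof.
move=> kn; rewrite /harm (@big_cat_nat _ _ _ k.+1 1 n.+1) //= lerDl.
by apply: sumr_ge0 => j _; rewrite invr_ge0 ler0n.
Qed.

Lemma inv_le_lnD (R : realType) m : (1 <= m)%N ->
  (m.+1%:R : R)^-1 <= ln (m.+1%:R : R) - ln (m%:R : R).
Proof.
move=> m1.
have p1 : (0 : R) < m.+1%:R by rewrite ltr0n.
have p2 : (0 : R) < m%:R by rewrite ltr0n.
have e : (m%:R : R) = m.+1%:R * (1 + - (m.+1%:R)^-1).
  by rewrite mulrDr mulr1 mulrN mulfV ?gt_eqF // -natr1; ring.
have h : (m.+1%:R : R)^-1 < 1.
  by rewrite invf_lt1 // ltr1n ltnS.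
have q : (0 : R) < 1 + - (m.+1%:R : R)^-1 by rewrite subr_gt0.
rewrite {1}e lnM ?posrE //.
have := le_ln1Dx (_ : -1 < - (m.+1%:R : R)^-1); rewrite ltrN2 => /(_ h) hh.
by rewrite opprD addrA subrr add0r lerNr.
Qed.

Lemma harm_ln (R : realType) m : (1 <= m)%N -> harm R m <= 1 + ln (m%:R : R).
Proof.
elim: m => // m IH _.
have [m0|mpos] := posnP m.
  by rewrite m0 /harm big_nat1 ln1 addr0 invr1.
rewrite /harm big_nat_recr //= -/(harm R m).
have := IH mpos; have := inv_le_lnD R mpos.
set a := harm R m; set b := ((m.+1)%:R : R)^-1; set c := ln (m.+1%:R : R); set d := ln (m%:R : R).
lra.
Qed.

Lemma ln_le_pow (R : realType) (x e : R) : 0 < x -> 0 < e -> ln x <= x `^ e / e.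
Proof.
move=> hx he; have := ln_sublinear (powR_gt0 e hx); rewrite ln_powR => h.
by rewrite ler_pdivlMr // mulrC ltW.
Qed.

Lemma kHH1 (R : realType) k : (k%:R : R) * HH R k 1 <= 2 * harm R k.
Proof.
rewrite /HH /= mulr_sumr.
apply: (@le_trans _ _ (\sum_(1 <= j < k.+1) ((j%:R : R)^-1 + ((k.+1 - j)%:R)^-1))).
  rewrite big_nat_cond [X in _ <= X]big_nat_cond; apply: ler_sum => j /andP[/andP[j1 j2] _].
  have pa : (0 : R) < j%:R by rewrite ltr0n.
  have pb : (0 : R) < (k.+1 - j)%:R by rewrite ltr0n subn_gt0.
  have E : ((j%:R : R)^-1 + ((k.+1 - j)%:R)^-1) = (k.+1%:R) * gg R k j.
    rewrite /gg natrM invfM mulrC.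
    have -> : (k.+1%:R : R) = j%:R + (k.+1 - j)%:R by rewrite -natrD subnKC // ltnW.
    by field; rewrite !gt_eqF.
  rewrite E ler_wpM2r ?gg_ge0 // ler_nat //.
have -> : 2 * harm R k = harm R k + harm R k by ring.
rewrite big_split /= ; apply: lerD => //.
rewrite big_nat_rev /= /harm big_nat_cond [X in _ <= X]big_nat_cond.
rewrite le_eqVlt; apply/orP; left; apply/eqP; apply: eq_bigr => j /andP[/andP[j1 j2] _].
congr ((_ %:R)^-1); lia.
Qed.

Unset Implicit Arguments.

Theorem lemma6 (R : realType) (ls lam alpha c : R) (ntil : nat -> nat) :
  0 < ls -> 0 < lam -> 1 < alpha -> alpha <= 2 -> 0 < c ->
  (alpha = 2 -> c < 2^-1) ->
  (forall n : nat, (2 <= n)%N ->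
     (ntil n <= 'C(n, 2))%N /\ (ntil n)%:R <= c * (n%:R `^ alpha)) ->
  exists C' : R, 0 < C' /\ exists N : nat, forall n : nat, (N <= n)%N ->
    greedy_avg_age ls lam n ('C(n, 2) - ntil n) <= C' * (n%:R `^ (alpha - 1)).
Proof.
move=> hls hlam ha1 ha2 hc _ hnt.
set e := alpha - 1.
have he : 0 < e by rewrite /e subr_gt0.
have he2 : 0 < 2 / e by rewrite divr_gt0.
exists (ls / lam * (3 + 2 / e + 2 * c)); split.
  by rewrite mulr_gt0 ?divr_gt0 //; lra.
exists 2%N => n hn.
have [hnt1 hnt2] := hnt n hn.
set nbar := ('C(n, 2) - ntil n)%N.
set k := gr_k n nbar.
have hkn : (k <= n)%N := gr_k_le n nbar.
have npos : (0 : R) < n%:R by rewrite ltr0n; lia.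
set u := lam / n%:R.
have hu : 0 < u by rewrite divr_gt0.
have hlink : forall a b : 'I_n, (a < k)%N -> (b < k)%N -> a != b -> @gr_link n nbar a b.
  move=> a b ha hb hab; rewrite /gr_link /=; apply/orP; left; apply/and3P; split => //.
have l0pos : forall j : 'I_n, 0 < @unif_l0 R n lam j by move=> j; exact: hu.
set beta := ls / u.
have b0 : 0 <= beta by rewrite divr_ge0 // ltW.
have hD : forall i : 'I_n,
    Delta_i (unif_l0 lam) (unif_l lam (@gr_link n nbar)) ls i <=
    beta * (if (i < k)%N then HH R k 1 else 1).
  move=> i; rewrite /Delta_i.
  have ne : [set i] != set0 by apply/set0Pn; exists i; rewrite inE.
  apply: le_trans (DeltaS_le l0pos (Bsup hu hls hkn hlink) ne) _.
  rewrite /BB -/beta; case: ifP => ik.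
    have iK : i \in Kset n k by rewrite inE.
    by rewrite (setIidPl _) ?sub1set // cards1.
  by rewrite ler_wpM2l // (HH_le1 hu hls hkn).
rewrite /greedy_avg_age /avg_age -/nbar.
set F := fun i : nat => beta * (if (i < k)%N then HH R k 1 else 1).
have hsum : \sum_(i < n) Delta_i (unif_l0 lam) (unif_l lam (@gr_link n nbar)) ls i <=
    \sum_(i < n) F i by apply: ler_sum => i _; exact: hD.
have sE : \sum_(i < n) F i = beta * (k%:R * HH R k 1 + (n - k)%:R).
  rewrite -(big_mkord xpredT F) (@big_cat_nat _ _ _ k) //=.
  rewrite big_nat_cond (eq_bigr (fun _ => beta * HH R k 1)); last first.
    by move=> j /andP[/andP[_ jk] _]; rewrite /F jk.
  rewrite -big_nat_cond sumr_const_nat subn0.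
  rewrite big_nat_cond (eq_bigr (fun _ => beta)); last first.
    by move=> j /andP[/andP[kj _] _]; rewrite /F ltnNge kj /= mulr1.
  rewrite -big_nat_cond sumr_const_nat.
  by rewrite -(mulr_natr (beta * HH R k 1)) -(mulr_natr beta); ring.
rewrite sE in hsum.
have bn : (n%:R)^-1 * beta = ls / lam.
  by rewrite /beta /u invf_div; field; rewrite !gt_eqF.
set P := n%:R `^ e.
have P1 : 1 <= P.
  rewrite /P; apply: le_trans (_ : (n%:R : R) `^ 0 <= _); first by rewrite powRr0.
  by apply: ler_powR; [rewrite ler1n; lia | exact: ltW].
have hk : k%:R * HH R k 1 <= 2 + 2 * (P / e).
  apply: le_trans (kHH1 R k) _.
  have := harm_mono R hkn; have := harm_ln R (_ : (1 <= n)%N); have := ln_le_pow npos he.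
  rewrite -/P => h1 h2 h3; have := h2 (ltnW hn); lra.
have hnk : (n - k)%:R <= 1 + 2 * c * P.
  have [kn|kn] := eqVneq k n.
    rewrite kn subnn; have : 0 <= c * P by rewrite mulr_ge0 ?powR_ge0 // ltW.
    lra.
  have kn' : (k < n)%N by rewrite ltn_neqAle kn hkn.
  have g := gap_nat hn hnt1 kn' (gr_k_max kn').
  have gR : (n - k.+1)%:R * n%:R <= 2 * (ntil n)%:R :> R.
    by rewrite -natrM -(natrM _ 2) ler_nat.
  have pa : n%:R `^ alpha = n%:R * P.
    rewrite /P -{1}(subrKC 1 alpha) -/e powRD ?powRr1 ?ler0n //.
    by apply/implyP => _; rewrite gt_eqF.
  rewrite pa in hnt2.
  have gR2 : (n - k.+1)%:R * n%:R <= (2 * c * P) * n%:R :> R.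
    apply: le_trans gR _.
    have -> : 2 * c * P * n%:R = 2 * (c * (n%:R * P)) by ring.
    by rewrite ler_pM2l.
  rewrite ler_pM2r // in gR2.
  rewrite -(subnSK kn').
  rewrite -natr1; lra.
apply: le_trans (ler_wpM2l (ltW (_ : 0 < (n%:R)^-1)) hsum) _.
  by rewrite invr_gt0.
rewrite mulrA bn -mulrA; apply: ler_wpM2l; first by rewrite divr_ge0 // ltW.
have -> : (3 + 2 / e + 2 * c) * P = 3 * P + 2 * (P / e) + 2 * c * P by field; rewrite gt_eqF.
lra.
Qed.
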